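(* Let $X$ and $Y$ be finite connected undirected graphs and $f:X\to Y$ a morphism which is a weak equivalence for the closed model on $\mathrm{UGph}$ defined by counting the family $(c^p_U)_{p\ge1}$, i.e. for every $p\ge1$ the map $\mathrm{Hom}_{\mathrm{UGph}}(c^p_U,X)\to\mathrm{Hom}_{\mathrm{UGph}}(c^p_U,Y)$, $h\mapsto f\circ h$, is bijective. Then $f$ is an isomorphism.
   Context: An undirected graph $X$ consists of a set of nodes $X(0)$, a set of half-arcs $X(1)$, maps $s,t:X(1)\to X(0)$ (source, target) and an involution $\iota$ of $X(1)$ with $s\circ\iota=t$ (fixed points of $\iota$ are allowed). A morphism $f:X\to Y$ is a pair $f_0:X(0)\to Y(0)$, $f_1:X(1)\to Y(1)$ with $f_0\circ s=s\circ f_1$, $f_0\circ t=t\circ f_1$, $f_1\circ\iota=\iota\circ f_1$; $\mathrm{UGph}$ is the resulting category. An arc is a pair $\{u,\iota(u)\}$; connectedness refers to the graph whose vertices are the nodes and whose edges join the source and target of each half-arc. For $p\ge1$, $c^p_U$ is the undirected graph with nodes $\mathbb{Z}/p\mathbb{Z}$ and half-arcs $[n]^+,[n]^-$ ($[n]\in\mathbb{Z}/p$), with $s([n]^+)=[n]$, $t([n]^+)=[n+1]$, $s([n]^-)=[n+1]$, $t([n]^-)=[n]$, $\iota([n]^+)=[n]^-$. *)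

(* Defs.v *)
From mathcomp Require Import all_boot.
Set Implicit Arguments. Unset Strict Implicit. Unset Printing Implicit Defensive.

(* A finite undirected graph: finite set of nodes, finite set of half-arcs,
   source/target maps and an involution iota with s o iota = t
   (fixed points of iota allowed). *)
Record ugraph := UGraph {
  node : finType;
  harc : finType;
  src : harc -> node;
  tgt : harc -> node;
  inv : harc -> harc;
  inv_invol : involutive inv;
  src_inv : forall a, src (inv a) = tgt a
}.

Record ugmor (X Y : ugraph) := UGMor {
  mor0 : {ffun node X -> node Y};
  mor1 : {ffun harc X -> harc Y};
  ugmorP : [forall a : harc X,
              [&& mor0 (src a) == src (mor1 a),
                  mor0 (tgt a) == tgt (mor1 a) &
                  mor1 (inv a) == inv (mor1 a)]]
}.

Lemma ugmor_comp_proof (X Y Z : ugraph) (g : ugmor Y Z) (f : ugmor X Y) :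
  [forall a : harc X,
     [&& [ffun x => mor0 g (mor0 f x)] (src a)
           == src ([ffun u => mor1 g (mor1 f u)] a),
         [ffun x => mor0 g (mor0 f x)] (tgt a)
           == tgt ([ffun u => mor1 g (mor1 f u)] a) &
         [ffun u => mor1 g (mor1 f u)] (inv a)
           == inv ([ffun u => mor1 g (mor1 f u)] a)]].
Proof.
apply/forallP => a; rewrite !ffunE.
have /forallP /(_ a) /and3P [/eqP f1 /eqP f2 /eqP f3] := ugmorP f.
have /forallP Hg := ugmorP g.
have /and3P [/eqP g1 /eqP g2 /eqP g3] := Hg (mor1 f a).
by rewrite f1 f2 f3 g1 g2 g3 !eqxx.
Qed.

Definition ugcomp (X Y Z : ugraph) (g : ugmor Y Z) (f : ugmor X Y) : ugmor X Z :=
  UGMor (ugmor_comp_proof g f).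

Lemma ugid_proof (X : ugraph) :
  [forall a : harc X,
     [&& [ffun x : node X => x] (src a) == src ([ffun u : harc X => u] a),
         [ffun x : node X => x] (tgt a) == tgt ([ffun u : harc X => u] a) &
         [ffun u : harc X => u] (inv a) == inv ([ffun u : harc X => u] a)]].
Proof. by apply/forallP => a; rewrite !ffunE !eqxx. Qed.

Definition ugid (X : ugraph) : ugmor X X := UGMor (ugid_proof X).

Definition ugiso (X Y : ugraph) (f : ugmor X Y) : Prop :=
  exists g : ugmor Y X, ugcomp g f = ugid X /\ ugcomp f g = ugid Y.

Definition ug_adj (X : ugraph) : rel (node X) :=
  fun x y => [exists a : harc X, (src a == x) && (tgt a == y)].

Definition ug_connected (X : ugraph) : Prop :=
  (exists x : node X, True) /\ forall x y : node X, connect (@ug_adj X) x y.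

(* The cycle graph c^p_U: nodes Z/pZ (= 'I_p), half-arcs [n]^+ = (n,true),
   [n]^- = (n,false). *)
Definition cyc_src (p : nat) (a : 'I_p * bool) : 'I_p :=
  if a.2 then a.1 else ordS a.1.
Definition cyc_tgt (p : nat) (a : 'I_p * bool) : 'I_p :=
  if a.2 then ordS a.1 else a.1.
Definition cyc_inv (p : nat) (a : 'I_p * bool) : 'I_p * bool := (a.1, ~~ a.2).

Lemma cyc_inv_invol (p : nat) : involutive (@cyc_inv p).
Proof. by case=> n b; rewrite /cyc_inv /= negbK. Qed.

Lemma cyc_src_inv (p : nat) (a : 'I_p * bool) :
  cyc_src (cyc_inv a) = cyc_tgt a.
Proof. by case: a => n [|]. Qed.

Definition cU (p : nat) : ugraph :=
  @UGraph 'I_p ('I_p * bool)%type (@cyc_src p) (@cyc_tgt p) (@cyc_inv p)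
    (@cyc_inv_invol p) (@cyc_src_inv p).

(* Main.v *)
Require Import Defs.
From mathcomp Require Import all_boot.
From mathcomp Require Import zify.
Set Implicit Arguments. Unset Strict Implicit. Unset Printing Implicit Defensive.

Lemma morS (X Y : ugraph) (g : ugmor X Y) a : mor0 g (src a) = src (mor1 g a).
Proof. by have /forallP/(_ a)/and3P[/eqP ? /eqP ? /eqP ?] := ugmorP g. Qed.
Lemma morT (X Y : ugraph) (g : ugmor X Y) a : mor0 g (tgt a) = tgt (mor1 g a).
Proof. by have /forallP/(_ a)/and3P[/eqP ? /eqP ? /eqP ?] := ugmorP g. Qed.
Lemma morI (X Y : ugraph) (g : ugmor X Y) a : mor1 g (Defs.inv a) = Defs.inv (mor1 g a).
Proof. by have /forallP/(_ a)/and3P[/eqP ? /eqP ? /eqP ?] := ugmorP g. Qed.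

Lemma tgt_inv (X : ugraph) (u : harc X) : tgt (Defs.inv u) = src u.
Proof. by rewrite -src_inv inv_invol. Qed.

Lemma ugmor_ext X Y (g h : ugmor X Y) : mor0 g = mor0 h -> mor1 g = mor1 h -> g = h.
Proof.
case: g => g0 g1 gP; case: h => h0 h1 hP /= E0 E1; subst.
by rewrite (bool_irrelevance gP hP).
Qed.

Section Cyc.
Variables (Z : ugraph) (k : nat) (a : 'I_k -> harc Z).
Hypothesis H : forall i, tgt (a i) = src (a (ordS i)).

Definition cyc_mor1 : {ffun harc (cU k) -> harc Z} :=
  [ffun e : 'I_k * bool => if e.2 then a e.1 else Defs.inv (a e.1)].
Definition cyc_mor0 : {ffun node (cU k) -> node Z} := [ffun n : 'I_k => src (a n)].

Lemma cyc_proof : [forall e : harc (cU k), [&& cyc_mor0 (src e) == src (cyc_mor1 e),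
   cyc_mor0 (tgt e) == tgt (cyc_mor1 e) & cyc_mor1 (Defs.inv e) == Defs.inv (cyc_mor1 e)]].
Proof.
apply/forallP => -[n b]; rewrite !ffunE; case: b => /=;
rewrite /cyc_src /cyc_tgt /cyc_inv /= ?ffunE /=.
- by rewrite H !eqxx.
- by rewrite src_inv tgt_inv H inv_invol !eqxx.
Qed.

Definition cyc_hom : ugmor (cU k) Z := UGMor cyc_proof.
End Cyc.

Lemma cyc_ext Z k (g h : ugmor (cU k) Z) :
  (forall n, mor1 g (n, true) = mor1 h (n, true)) -> g = h.
Proof.
move=> E; apply: ugmor_ext; apply/ffunP => x.
- change (mor0 g (@src (cU k) (x,true)) = mor0 h (@src (cU k) (x,true))).
  by rewrite !morS E.
- case: x => n [|]; first exact: E.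
  change (mor1 g (@Defs.inv (cU k) (n,true)) = mor1 h (@Defs.inv (cU k) (n,true))).
  by rewrite !morI E.
Qed.

Definition a2 (Z : ugraph) (u : harc Z) (i : 'I_2) : harc Z :=
  if val i == 0 then u else Defs.inv u.

Lemma a2P (Z : ugraph) (u : harc Z) i : tgt (a2 u i) = src (a2 u (ordS i)).
Proof.
case: i => -[|[|m]] Hi //; rewrite /a2 /=.
- by rewrite src_inv.
- by rewrite tgt_inv.
Qed.

Definition hom2 (Z : ugraph) (u : harc Z) := cyc_hom (a2P u).

Fixpoint walkb (Z : ugraph) (x : node Z) (s : seq (harc Z)) (y : node Z) : bool :=
  if s is a :: s' then (src a == x) && walkb (tgt a) s' y else x == y.

Lemma path_walk (Z : ugraph) x p : path (@ug_adj Z) x p -> exists s, walkb x s (last x p).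
Proof.
elim: p x => [|z p IH] x /=; first by exists [::] => /=.
case/andP => /existsP[a /andP[/eqP Sa /eqP Ta]] Hp.
have [s Hs] := IH z Hp; exists (a :: s); by rewrite /= Sa Ta eqxx Hs.
Qed.

Lemma walk_nth (Z : ugraph) (x : node Z) (s : seq (harc Z)) (y : node Z) (d : harc Z) : walkb x s y ->
  (forall i, i.+1 < size s -> tgt (nth d s i) = src (nth d s i.+1)) /\
  (s != [::] -> src (nth d s 0) = x /\ tgt (nth d s (size s).-1) = y).
Proof.
elim: s x => [|a s IH] x //= /andP[/eqP Sa Hw].
have [IH1 IH2] := IH _ Hw; clear IH; split.
- case=> [|j] /=.
  + by case: s Hw IH1 IH2 => [|b s] //= Hw IH1 IH2 _; case: (IH2 isT).
  + by move=> Hj; apply: IH1.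
- move=> _; split => //.
  case: s Hw IH1 IH2 => [|b s] /= Hw IH1 IH2; first by apply/eqP.
  by case: (IH2 isT).
Qed.

Theorem proposition4p8 (X Y : ugraph) (f : ugmor X Y) :
  ug_connected X -> ug_connected Y ->
  (forall p : nat, 0 < p ->
     bijective (fun h : ugmor (cU p) X => ugcomp f h)) ->
  ugiso f.
Proof.
move=> [[x0 _] cX] [_ cY] Hb.
have [G2 FG2 GF2] := Hb 2 isT.
have f1inj : injective (mor1 f).
  move=> u v E.
  have E2 : ugcomp f (hom2 u) = ugcomp f (hom2 v).
    apply: cyc_ext => n; rewrite /= !ffunE /= /a2.
    by case: (val n == 0); rewrite ?morI E.
  have := congr1 (fun g : ugmor (cU 2) X => mor1 g (ord0, true)) (can_inj FG2 E2).
  by rewrite /= !ffunE.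
have f1surj : forall w, exists u, mor1 f u == w.
  move=> w; exists (mor1 (G2 (hom2 w)) (ord0, true)).
  have := congr1 (fun g : ugmor (cU 2) Y => mor1 g (ord0, true)) (GF2 (hom2 w)).
  by rewrite /= !ffunE /= => ->.
have f0surj : forall y, exists x, mor0 f x == y.
  move=> y; have /connectP[[|z p] Hp Hl] := cY y (mor0 f x0).
    by exists x0; rewrite Hl.
  case/andP: Hp => /existsP[a /andP[/eqP Sa _]] _.
  have [u /eqP Hu] := f1surj a.
  by exists (src u); rewrite morS Hu Sa.
have f0inj : injective (mor0 f).
  move=> x x' E.
  have /connectP[p Hp Hl] := cX x x'.
  have [s Hs] := path_walk Hp; rewrite -Hl in Hs.
  case: s Hs => [|d s'] Hs; first by apply/eqP.
  set s := d :: s' in Hs.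
  have [Hc Hend] := walk_nth d Hs.
  have [Hfirst Hlast] := Hend isT.
  pose k := size s.
  have k0 : 0 < k by [].
  pose a := fun i : 'I_k => mor1 f (nth d s i).
  have Ha : forall i, tgt (a i) = src (a (ordS i)).
    move=> i; rewrite /a -morT -morS /=.
    have Hi := ltn_ord i.
    case: (ltnP i.+1 k) => Hik.
      by rewrite modn_small // Hc.
    have Hk : i.+1 = k by lia.
    rewrite Hk modnn.
    have -> : nat_of_ord i = (size s).-1 by move: Hk => /(congr1 predn).
    by rewrite Hlast Hfirst E.
  have [Gk FGk GFk] := Hb k k0.
  set h' := Gk (cyc_hom Ha).
  have Eh : forall i : 'I_k, mor1 h' (i, true) = nth d s i.
    move=> i; apply: f1inj.
    have := congr1 (fun g : ugmor (cU k) Y => mor1 g (i, true)) (GFk (cyc_hom Ha)).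
    by rewrite /= !ffunE /=.
  have kp : k.-1 < k by lia.
  pose il : 'I_k := Ordinal kp.
  pose i0 : 'I_k := Ordinal k0.
  have Hl0 : ordS il = i0.
    by apply: val_inj => /=; exact: modnn.
  rewrite -Hlast -Hfirst.
  have -> : (size s).-1 = il by [].
  have -> : 0 = nat_of_ord i0 by [].
  rewrite -!Eh.
  idtac.
  rewrite -morT -morS.
  by rewrite /= /cyc_src /cyc_tgt /= Hl0.
pose g0 := fun y => xchoose (f0surj y).
pose g1 := fun w => xchoose (f1surj w).
have g0K : forall y, mor0 f (g0 y) = y by move=> y; apply/eqP/(xchooseP (f0surj y)).
have g1K : forall w, mor1 f (g1 w) = w by move=> w; apply/eqP/(xchooseP (f1surj w)).
have gP : [forall w : harc Y, [&& [ffun y => g0 y] (src w) == src ([ffun w => g1 w] w),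
    [ffun y => g0 y] (tgt w) == tgt ([ffun w => g1 w] w) &
    [ffun w => g1 w] (Defs.inv w) == Defs.inv ([ffun w => g1 w] w)]].
  apply/forallP => w; rewrite !ffunE.
  apply/and3P; split; apply/eqP.
  - by apply: f0inj; rewrite g0K morS g1K.
  - by apply: f0inj; rewrite g0K morT g1K.
  - by apply: f1inj; rewrite g1K morI g1K.
exists (UGMor gP); split; apply: ugmor_ext; apply/ffunP => z; rewrite /= !ffunE.
- by apply: f0inj; rewrite g0K.
- by apply: f1inj; rewrite g1K.
- by rewrite g0K.
- by rewrite g1K.
Qed.
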